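(* Let $A\subset B(H)$ be an R$^*$-algebra with $\mathrm{id}_H\in A$, and let $p,q$ be projections in $A$. Then the projection onto $pH+qH$ belongs to $A$ and is the least upper bound $p\vee q$ of $p,q$ in the set $\mathcal{P}(A)$ of projections of $A$ (in particular $pH+qH$ is closed); the projection onto $pH\cap qH$ belongs to $A$ and is the greatest lower bound $p\wedge q$ in $\mathcal{P}(A)$; and $1-p$, the projection onto $(pH)^\perp$, belongs to $A$.
   Context: An R$^*$-algebra is a (not necessarily closed) $^*$-subalgebra $A$ of $B(H)$, $H$ a complex Hilbert space, such that for every $x\in A$ there exists $y\in A$ with $xyx=x$; equivalently, every self-adjoint operator in $A$ has finite spectrum. $\mathcal{P}(A)=\{p\in A: p=p^2=p^*\}$ is ordered by $p\le q$ iff $pq=p$ (i.e. $pH\subset qH$). *)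

(* Defs.v *)
From HB Require Import structures.
From mathcomp Require Import all_boot all_order all_algebra.
From mathcomp Require Import complex.
From mathcomp Require Import reals.
Set Implicit Arguments. Unset Strict Implicit. Unset Printing Implicit Defensive.
Import Order.TTheory GRing.Theory Num.Theory.
Local Open Scope ring_scope.

Section Hilbert.
Variables (R : realType) (V : lmodType R[i]) (ip : V -> V -> R[i]).

Definition is_inner_product : Prop :=
  [/\ (forall (a : R[i]) x y z, ip (a *: x + y) z = a * ip x z + ip y z),
      (forall x y, ip y x = (ip x y)^*),
      (forall x, 0 <= ip x x) &
      (forall x, ip x x = 0 -> x = 0)].

(* completeness for the norm ||x|| = sqrt (ip x x) (stated with squares) *)
Definition ip_cauchy (u : nat -> V) : Prop :=
  forall e : R[i], 0 < e -> exists N : nat, forall m n : nat,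
    (N <= m)%N -> (N <= n)%N -> ip (u m - u n) (u m - u n) < e.

Definition ip_converges (u : nat -> V) (x : V) : Prop :=
  forall e : R[i], 0 < e -> exists N : nat, forall n : nat,
    (N <= n)%N -> ip (u n - x) (u n - x) < e.

Definition ip_complete : Prop :=
  forall u : nat -> V, ip_cauchy u -> exists x, ip_converges u x.

Definition is_linear_op (T : V -> V) : Prop :=
  forall (a : R[i]) x y, T (a *: x + y) = a *: T x + T y.

Definition is_bounded_op (T : V -> V) : Prop :=
  exists M : R[i], forall x, ip (T x) (T x) <= M * ip x x.

Definition BH (T : V -> V) : Prop := is_linear_op T /\ is_bounded_op T.

Definition is_adjoint (T S : V -> V) : Prop :=
  forall x y, ip (T x) y = ip x (S y).

(* A is a (not necessarily closed) *-subalgebra of B(H) *)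
Definition is_star_subalgebra (A : (V -> V) -> Prop) : Prop :=
  (forall T, A T -> BH T) /\
  [/\ A (fun _ => 0),
      (forall S T, A S -> A T -> A (fun x => S x + T x)),
      (forall (a : R[i]) T, A T -> A (fun x => a *: T x)),
      (forall S T, A S -> A T -> A (S \o T)) &
      (forall T, A T -> exists S, A S /\ is_adjoint T S)].

Definition is_Rstar_algebra (A : (V -> V) -> Prop) : Prop :=
  is_star_subalgebra A /\
  (forall x, A x -> exists y, A y /\ x \o y \o x = x).

Definition is_projection (p : V -> V) : Prop :=
  BH p /\ p \o p = p /\ is_adjoint p p.

Definition projA (A : (V -> V) -> Prop) (p : V -> V) : Prop :=
  A p /\ is_projection p.

Definition proj_le (p q : V -> V) : Prop := p \o q = p.

Definition range (T : V -> V) : V -> Prop := fun y => exists x, T x = y.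

Definition orth (S : V -> Prop) : V -> Prop :=
  fun x => forall y, S y -> ip x y = 0.

End Hilbert.

(* Main.v *)
Require Import Defs.
From HB Require Import structures.
From mathcomp Require Import all_boot all_order all_algebra.
From mathcomp Require Import complex.
From mathcomp Require Import reals.
From mathcomp Require Import boolp.
Import Order.TTheory GRing.Theory Num.Theory.
Local Open Scope ring_scope.

Section Aux.
Variables (R : realType) (V : lmodType R[i]) (ip : V -> V -> R[i]).
Hypothesis Hip : is_inner_product ip.

Lemma ipDl x y z : ip (x + y) z = ip x z + ip y z.
Proof. by case: Hip => h _ _ _; have := h 1 x y z; rewrite scale1r mul1r. Qed.

Lemma ip0l z : ip 0 z = 0.
Proof.
case: Hip => h _ _ _; have := h (-1) 0 0 z.
by rewrite scaler0 addr0 mulN1r addNr.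
Qed.

Lemma ipZl a x z : ip (a *: x) z = a * ip x z.
Proof. by case: Hip => h _ _ _; have := h a x 0 z; rewrite addr0 ip0l addr0. Qed.

Lemma ipNl x z : ip (- x) z = - ip x z.
Proof. by rewrite -scaleN1r ipZl mulN1r. Qed.

Lemma ipBl x y z : ip (x - y) z = ip x z - ip y z.
Proof. by rewrite ipDl ipNl. Qed.

Lemma ipC x y : ip y x = (ip x y)^*.
Proof. by case: Hip => _ h _ _; apply: h. Qed.

Lemma ipDr x y z : ip z (x + y) = ip z x + ip z y.
Proof. by rewrite (ipC (x+y) z) (ipC x z) (ipC y z) ipDl rmorphD. Qed.

Lemma ip0r z : ip z 0 = 0.
Proof. by rewrite (ipC 0 z) ip0l conjC0. Qed.

Lemma ipNr x z : ip z (- x) = - ip z x.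
Proof. by rewrite (ipC (-x) z) (ipC x z) ipNl rmorphN. Qed.

Lemma ipBr x y z : ip z (x - y) = ip z x - ip z y.
Proof. by rewrite ipDr ipNr. Qed.

Lemma ip_ge0 x : 0 <= ip x x.
Proof. by case: Hip. Qed.

Lemma ip_def x : ip x x = 0 -> x = 0.
Proof. by case: Hip => _ _ _; apply. Qed.

Lemma ip_eql a b : (forall y, ip a y = ip b y) -> a = b.
Proof.
move=> h; apply/eqP; rewrite -subr_eq0; apply/eqP/ip_def.
by rewrite ipBl h subrr.
Qed.

Lemma ip_eqr a b : (forall y, ip y a = ip y b) -> a = b.
Proof. by move=> h; apply: ip_eql => y; rewrite (ipC y a) (ipC y b) h. Qed.

Lemma adj_sym {T S} : is_adjoint ip T S -> is_adjoint ip S T.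
Proof. by move=> h x y; rewrite ipC -h -ipC. Qed.

Section Lin.
Variable T : V -> V.
Hypothesis HT : is_linear_op T.
Lemma linD x y : T (x + y) = T x + T y.
Proof. by have := HT 1 x y; rewrite !scale1r. Qed.
Lemma lin0 : T 0 = 0.
Proof. by have := HT (-1) 0 0; rewrite scaler0 addr0 scaleN1r addNr. Qed.
Lemma linZ a x : T (a *: x) = a *: T x.
Proof. by have := HT a x 0; rewrite !addr0 lin0 addr0. Qed.
Lemma linN x : T (- x) = - T x.
Proof. by rewrite -scaleN1r linZ scaleN1r. Qed.
Lemma linB x y : T (x - y) = T x - T y.
Proof. by rewrite linD linN. Qed.
End Lin.
Arguments linD {T}. Arguments lin0 {T}. Arguments linZ {T}. Arguments linN {T}. Arguments linB {T}.

Variable A : (V -> V) -> Prop.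
Hypothesis HA : is_Rstar_algebra ip A.
Hypothesis Hid : A id.

Lemma A_lin {T} : A T -> is_linear_op T.
Proof. by case: HA => [[h _] _] /h []. Qed.
Lemma A_add {S T} : A S -> A T -> A (fun x => S x + T x).
Proof. by case: HA => [[_ [_ h _ _ _]] _]; apply: h. Qed.
Lemma A_comp {S T} : A S -> A T -> A (S \o T).
Proof. by case: HA => [[_ [_ _ _ h _]] _]; apply: h. Qed.
Lemma A_opp {T} : A T -> A (fun x => - T x).
Proof.
case: HA => [[_ [_ _ h _ _]] _] /(h (-1)) H.
by have -> : (fun x => - T x) = (fun x => (-1) *: T x) by apply: funext => x; rewrite scaleN1r.
Qed.
Lemma A_sub {S T} : A S -> A T -> A (fun x => S x - T x).
Proof. by move=> hS hT; apply: A_add => //; apply: A_opp. Qed.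
Lemma A_adj {T} : A T -> exists S, A S /\ is_adjoint ip T S.
Proof. by case: HA => [[_ [_ _ _ _ h]] _]; apply: h. Qed.
Lemma A_reg {T} : A T -> exists S, A S /\ T \o S \o T = T.
Proof. by case: HA => _; apply. Qed.


Lemma range_proj x : A x -> exists P w, A P /\ A w /\ (forall v, P (P v) = P v) /\
  is_adjoint ip P P /\ (forall v, P (x v) = x v) /\ (forall v, P v = x (w v)).
Proof.
move=> Ax; have [y [Ay Hxy]] := A_reg Ax.
have xyx v : x (y (x v)) = x v by rewrite -[RHS](congr1 (fun f => f v) Hxy).
pose e := x \o y.
have Ae : A e by apply: A_comp.
have He v : e (e v) = e v by rewrite /e /= xyx.
have Hex v : e (x v) = x v by rewrite /e /= xyx.
have [f [Af Hadj]] := A_adj Ae.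
have Hadj' := adj_sym Hadj.
have le := A_lin Ae; have lf := A_lin Af.
have Hff v : f (f v) = f v.
  by apply: ip_eqr => z; rewrite -!Hadj He.
pose u := fun v => e v + f v - v.
have Au : A u by apply: A_sub => //; apply: A_add.
have lu := A_lin Au.
have Hu : is_adjoint ip u u.
  move=> v z; rewrite /u ipBl ipDl ipBr ipDr Hadj Hadj'.
  by rewrite (addrC (ip v (f z))).
have Hinj v : u v = 0 -> v = 0.
  move/eqP; rewrite subr_eq0 => /eqP h1.
  have := congr1 e h1; rewrite (linD le) He => h2.
  have h3 : e (f v) = 0 by apply: (addrI (e v)); rewrite addr0.
  have h4 : f v = 0 by apply: ip_def; rewrite Hadj' h3 ip0r.
  rewrite h4 addr0 in h1.
  by apply: ip_def; rewrite -{1}h1 Hadj h4 ip0r.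
have [w [Aw Huw]] := A_reg Au.
have lw := A_lin Aw.
have Hwu v : w (u v) = v.
  apply/eqP; rewrite -subr_eq0; apply/eqP/Hinj.
  have h := congr1 (fun f => f v) Huw; simpl in h.
  by rewrite (linB lu) h subrr.
have [w' [Aw' Hw']] := A_adj Aw.
have Huw' v : u (w' v) = v.
  by apply: ip_eqr => z; rewrite -Hu -Hw' Hwu.
have Huw2 v : u (w v) = v.
  have -> : w v = w' v by rewrite -[w' v]Hwu Huw'.
  exact: Huw'.
have Hws : is_adjoint ip w w.
  by move=> a b; rewrite -[in LHS](Huw2 b) -Hu Huw2.
have Heu v : e (u v) = e (f v).
  by rewrite /u (linB le) (linD le) He [e v + _]addrC addrK.
have Huf v : u (f v) = e (f v).
  by rewrite /u Hff addrK.
have Hue v : u (e v) = f (e v).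
  by rewrite /u He [e v + _]addrC addrK.
have Hfu v : f (u v) = f (e v).
  by rewrite /u (linB lf) (linD lf) Hff addrK.
have Hwf v : w (f v) = e (w v).
  transitivity (w (f (u (w v)))); first by rewrite Huw2.
  by rewrite Hfu -Hue Hwu.
have Hwe v : w (e v) = f (w v).
  transitivity (w (e (u (w v)))); first by rewrite Huw2.
  by rewrite Heu -Huf Hwu.
exists (e \o w), (y \o w); split; [|split; [|split; [|split; [|split]]]].
- exact: A_comp.
- exact: A_comp.
- by move=> v /=; rewrite Hwe -Heu Huw2.
- by move=> a b /=; rewrite Hadj Hws Hwf.
- by move=> v /=; rewrite -{1}Hex Hwe -Heu Huw2 Hex.
- by [].
Qed.


Lemma proj_parts p : projA ip A p ->
  [/\ A p, is_linear_op p, (forall v, p (p v) = p v) & is_adjoint ip p p].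
Proof.
case=> Ap [[lp _] [pp adj]]; split => // v.
by have := congr1 (fun f => f v) pp.
Qed.

Lemma mk_proj P : A P -> (forall v, P (P v) = P v) -> is_adjoint ip P P ->
  projA ip A P.
Proof.
move=> AP PP adj; split => //; split; first by case: HA => [[h _] _]; apply: h.
by split => //; apply: funext.
Qed.

Lemma proj_leP (p r : V -> V) : proj_le p r <-> forall v, p (r v) = p v.
Proof.
split; first by move=> h v; have := congr1 (fun f => f v) h.
by move=> h; apply: funext.
Qed.

Lemma flip {a b} : is_adjoint ip a a -> is_adjoint ip b b ->
  (forall v, a (b v) = a v) -> forall v, b (a v) = a v.
Proof. by move=> ha hb h v; apply: ip_eql => z; rewrite hb ha h. Qed.

Lemma flip2 {a b} : is_adjoint ip a a -> is_adjoint ip b b ->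
  (forall v, b (a v) = a v) -> forall v, a (b v) = a v.
Proof. by move=> ha hb h v; apply: ip_eql => z; rewrite ha hb h. Qed.

Lemma range_idem (T : V -> V) : (forall v, T (T v) = T v) ->
  forall y, range T y <-> T y = y.
Proof. by move=> h y; split; [case=> x <-; apply: h | move=> e; exists y]. Qed.

Lemma compl {p} : projA ip A p ->
  projA ip A (fun x => x - p x) /\
  (forall y, range (fun x => x - p x) y <-> orth ip (range p) y).
Proof.
case/proj_parts => Ap lp pp adj.
have PP v : v - p v - p (v - p v) = v - p v by rewrite (linB lp) pp subrr subr0.
split.
  apply: mk_proj => //; first by apply: A_sub.
  by move=> a b; rewrite ipBl ipBr adj.
move=> y; rewrite range_idem //; split.
  by move=> <- _ [u <-]; rewrite -adj (linB lp) pp subrr ip0l.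
move=> h; have : p y = 0.
  by apply: ip_def; rewrite adj pp; apply: h; exists y.
by move=> ->; rewrite subr0.
Qed.

Lemma join {p q} : projA ip A p -> projA ip A q ->
  exists r : V -> V,
     projA ip A r /\
     (forall y, range r y <-> exists x1 x2, y = p x1 + q x2) /\
     proj_le p r /\ proj_le q r /\
     (forall s, projA ip A s -> proj_le p s -> proj_le q s -> proj_le r s).
Proof.
case/proj_parts => Ap lp pp adjp; case/proj_parts => Aq lq qq adjq.
pose x := fun v => p v + q v.
have Ax : A x by apply: A_add.
have adjx : is_adjoint ip x x by move=> a b; rewrite /x ipDl ipDr adjp adjq.
have [P [w [AP [Aw [PP [adjP [Px Pw]]]]]]] := range_proj _ Ax.
have lP := A_lin AP.
have key a : p a + q a = 0 -> p a = 0 /\ q a = 0.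
  move=> h.
  have e1 : ip (p a) (p a) + ip (q a) (q a) = 0.
    by rewrite adjp pp adjq qq -ipDr h ip0r.
  move/eqP: e1; rewrite paddr_eq0 ?ip_ge0 // => /andP [/eqP h1 /eqP h2].
  by split; apply: ip_def.
have xP v : x (v - P v) = 0.
  apply: ip_eql => z; rewrite adjx ipBl adjP Px subrr ip0l //.
have pP v : p (P v) = p v.
  have [h _] := key _ (xP v); apply/eqP; rewrite eq_sym -subr_eq0 -(linB lp).
  by apply/eqP.
have qP v : q (P v) = q v.
  have [_ h] := key _ (xP v); apply/eqP; rewrite eq_sym -subr_eq0 -(linB lq).
  by apply/eqP.
have Pp := flip adjp adjP pP.
have Pq := flip adjq adjP qP.
exists P; split; first by apply: mk_proj.
split.
  move=> y; split.
    by case=> v <-; exists (w v), (w v); rewrite Pw.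
  by case=> x1 [x2 ->]; exists (p x1 + q x2); rewrite (linD lP) Pp Pq.
split; first by apply/proj_leP.
split; first by apply/proj_leP.
move=> s /proj_parts [As ls ss adjs] /proj_leP ps /proj_leP qs.
have sp := flip adjp adjs ps; have sq := flip adjq adjs qs.
apply/proj_leP; apply: (flip2 adjP adjs) => v.
by rewrite Pw (linD ls) sp sq.
Qed.


Lemma meet {p q} : projA ip A p -> projA ip A q ->
  exists t : V -> V,
     projA ip A t /\
     (forall y, range t y <-> range p y /\ range q y) /\
     proj_le t p /\ proj_le t q /\
     (forall s, projA ip A s -> proj_le s p -> proj_le s q -> proj_le s t).
Proof.
move=> Hp Hq.
have [cp _] := compl Hp; have [cq _] := compl Hq.
have [r [Hr [Hrange [Hpr [Hqr _]]]]] := join cp cq.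
have [ct _] := compl Hr.
case/proj_parts: (Hp) => Ap lp pp adjp; case/proj_parts: (Hq) => Aq lq qq adjq.
case/proj_parts: (Hr) => Ar lr rr adjr.
case/proj_parts: (ct) => At lt tt adjt.
case/proj_parts: (cp) => Ap' lp' pp' adjp'; case/proj_parts: (cq) => Aq' lq' qq' adjq'.
move/proj_leP: Hpr => Hpr; move/proj_leP: Hqr => Hqr.
have rp := flip adjp' adjr Hpr; have rq := flip adjq' adjr Hqr.
have rdec v : exists x1 x2, r v = x1 - p x1 + (x2 - q x2).
  by apply/Hrange; exists v.
exists (fun x => x - r x); split => //.
split.
  move=> y; rewrite (range_idem _ tt) (range_idem _ pp) (range_idem _ qq); split.
    move=> h; have r0 : r y = 0.
      have : - r y = 0 by apply: (addrI y); rewrite addr0.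
      by move/eqP; rewrite oppr_eq0 => /eqP.
    have e1 := Hpr y; have e2 := Hqr y.
    rewrite r0 (lin0 lp) subr0 in e1; rewrite r0 (lin0 lq) subr0 in e2.
    by split; apply/eqP; rewrite eq_sym -subr_eq0; [rewrite -e1 | rewrite -e2].
  case=> hp hq.
  have r0 : r y = 0.
    apply: ip_def; rewrite adjr rr.
    have [x1 [x2 ->]] := rdec y.
    by rewrite ipDr -adjp' -adjq' hp hq !subrr !ip0l addr0.
  by rewrite r0 subr0.
split.
  apply/proj_leP => v.
  have h := rp v; rewrite (linB lr) in h.
  have h2 : r (p v) = r v - (v - p v) by rewrite -h opprB addrC subrK.
  by rewrite h2 opprB addrA [p v + _]addrC subrK.
split.
  apply/proj_leP => v.
  have h := rq v; rewrite (linB lr) in h.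
  have h2 : r (q v) = r v - (v - q v) by rewrite -h opprB addrC subrK.
  by rewrite h2 opprB addrA [q v + _]addrC subrK.
move=> s /proj_parts [As ls ss adjs] /proj_leP ps /proj_leP qs.
apply/proj_leP => v.
have [x1 [x2 ->]] := rdec v.
by rewrite !(linB ls) (linD ls) !(linB ls) ps qs !subrr addr0 subr0.
Qed.

End Aux.

Theorem proposition4p1 (R : realType) (V : lmodType R[i]) (ip : V -> V -> R[i])
  (Hip : is_inner_product ip) (Hcomplete : ip_complete ip)
  (A : (V -> V) -> Prop) (HA : is_Rstar_algebra ip A) (Hid : A id)
  (p q : V -> V) (Hp : projA ip A p) (Hq : projA ip A q) :
  (* the projection onto pH + qH is in A and is p \/ q in P(A) *)
  (exists r : V -> V,
     projA ip A r /\
     (forall y, range r y <-> exists x1 x2, y = p x1 + q x2) /\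
     proj_le p r /\ proj_le q r /\
     (forall s, projA ip A s -> proj_le p s -> proj_le q s -> proj_le r s)) /\
  (* the projection onto pH /\ qH is in A and is p /\ q in P(A) *)
  (exists t : V -> V,
     projA ip A t /\
     (forall y, range t y <-> range p y /\ range q y) /\
     proj_le t p /\ proj_le t q /\
     (forall s, projA ip A s -> proj_le s p -> proj_le s q -> proj_le s t)) /\
  (* 1 - p is in A and is the projection onto (pH)^perp *)
  (projA ip A (fun x => x - p x) /\
   (forall y, range (fun x => x - p x) y <-> orth ip (range p) y)).
Proof.
split; first exact: (join _ _ _ Hip _ HA Hid Hp Hq).
split; first exact: (meet _ _ _ Hip _ HA Hid Hp Hq).
by apply: compl; eauto.
Qed.
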